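(* Let $f_1(x)=\log(1+x^2)$ for $x\in\mathbb R$, and let $f_1^{(4)}$ denote its fourth derivative. Then \[ \int_{\mathbb R} f_1^{(4)}(x)\, f_1(x)^3\,dx<0 . \] *)

(* Defs.v *)
From Stdlib Require Import Reals.
From Coquelicot Require Import Coquelicot.
Open Scope R_scope.

Definition f1 (x : R) : R := ln (1 + x ^ 2).

(* Main.v *)
Require Import Defs.
From Stdlib Require Import Reals Lra Lia List Classical.
From Coquelicot Require Import Coquelicot.
Import ListNotations.
Open Scope R_scope.
Fixpoint pe (l : list R) (u : R) : R := match l with nil => 0 | c :: l' => c + u * pe l' u end.

Lemma pe_nonneg l u : 0 <= u -> List.Forall (fun c => 0 <= c) l -> 0 <= pe l u.
Proof.
  intros Hu Hl; induction Hl as [|c l Hc Hl IH]; simpl; [lra|].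
  pose proof (Rmult_le_pos _ _ Hu IH); lra.
Qed.

Lemma pe_bound l b u : 0 <= u -> 0 <= b -> List.Forall (fun c => Rabs c <= b) l ->
  Rabs (pe l u) <= INR (length l) * b * (1+u)^(pred (length l)).
Proof.
  intros Hu Hb Hl; induction Hl as [|c L Hc Hl IH].
  - simpl. rewrite Rabs_R0; lra.
  - destruct L as [|c' l'].
    + simpl. rewrite Rmult_0_r, Rplus_0_r. lra.
    + set (L := c' :: l') in *.
      assert (HL : length L = S (length l')) by reflexivity.
      change (pe (c :: L) u) with (c + u * pe L u).
      change (length (c :: L)) with (S (length L)).
      rewrite S_INR. change (pred (S (length L))) with (length L).
      rewrite HL in IH |- *. change (pred (S (length l'))) with (length l') in IH.
      rewrite S_INR in IH |- *. simpl pow.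
      set (n := length l') in *. set (P := pe L u) in *.
      assert (H1 : Rabs (c + u * P) <= Rabs c + u * Rabs P).
      { eapply Rle_trans; [apply Rabs_triang|]. rewrite Rabs_mult, (Rabs_pos_eq u Hu); lra. }
      assert (H2 : 1 <= (1+u)^n) by (apply pow_R1_Rle; lra).
      assert (H4: u * Rabs P <= u * ((INR n + 1) * b * (1 + u) ^ n))
        by (apply Rmult_le_compat_l; assumption).
      assert (0 <= INR n) by apply pos_INR.
      assert (0 <= b * (1+u)^n) by nra.
      assert (Rabs c <= b * (1+u)^n) by nra.
      nra.
Qed.

Lemma mono_nd (g g' : R -> R) a b :
  (forall x, is_derive g x (g' x)) -> (forall x, a <= x <= b -> 0 <= g' x) -> a <= b -> g a <= g b.
Proof.
  intros Hd Hp Hab.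
  destruct (MVT_gen g a b g') as [c [Hc Heq]].
  - intros x _; apply Hd.
  - intros x _. apply continuity_pt_filterlim. apply (ex_derive_continuous (K := R_AbsRing) (V := R_NormedModule)). eexists; apply Hd.
  - rewrite Rmin_left, Rmax_right in Hc by lra.
    pose proof (Hp c Hc). nra.
Qed.

Lemma ML1 (g : R -> R) m :
  (forall x y, x <= y -> g y <= g x) -> (forall x, 0 <= x -> m <= g x) ->
  exists l : R, is_lim g p_infty l /\ l <= g 0.
Proof.
  intros Hmon Hb.
  set (E := fun y => exists x, 0 <= x /\ y = - g x).
  assert (HE : bound E).
  { exists (-m). intros y [x [Hx ->]]. pose proof (Hb x Hx); lra. }
  assert (HE' : exists y, E y) by (exists (- g 0), 0; split; [lra|reflexivity]).
  destruct (completeness E HE HE') as [L0 [HL1 HL2]].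
  exists (- L0). split.
  - apply is_lim_spec. intros eps. simpl.
    destruct (classic (exists x, 0 <= x /\ - g x > L0 - eps)) as [[x0 [Hx0 Hgx0]]|Hn].
    + exists x0. intros x Hx.
      assert (HEx : E (- g x)) by (exists x; split; [lra|reflexivity]).
      pose proof (HL1 _ HEx). pose proof (Hmon x0 x (Rlt_le _ _ Hx)).
      apply Rabs_lt_between. split; lra.
    + exfalso.
      assert (Hub : is_upper_bound E (L0 - eps)).
      { intros y [x [Hx ->]]. apply Rnot_lt_le. intros Hc. apply Hn. exists x; split; lra. }
      pose proof (HL2 _ Hub). pose proof (cond_pos eps). lra.
  - assert (E (- g 0)) by (exists 0; split; [lra|reflexivity]).
    pose proof (HL1 _ H). lra.
Qed.

Lemma ML2 (g : R -> R) m :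
  (forall x y, x <= y -> g y <= g x) -> (forall x, x <= 0 -> g x <= m) ->
  exists l : R, is_lim g m_infty l /\ g 0 <= l.
Proof.
  intros Hmon Hb.
  destruct (ML1 (fun x => - g (- x)) (-m)) as [l [Hl Hl0]].
  - intros x y Hxy. pose proof (Hmon (-y) (-x) ltac:(lra)). lra.
  - intros x Hx. pose proof (Hb (-x) ltac:(lra)). lra.
  - exists (- l). split.
    + apply is_lim_spec. apply is_lim_spec in Hl. intros eps. destruct (Hl eps) as [M HM].
      exists (- M). intros x Hx. specialize (HM (- x) ltac:(lra)).
      rewrite Ropp_involutive in HM.
      replace (g x - - l) with (- (- g x - l)) by ring. rewrite Rabs_Ropp. exact HM.
    + rewrite Ropp_0 in Hl0. lra.
Qed.

Definition sx x := sqrt (sqrt (1 + x^2)).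

Lemma sx_facts x : 1 <= sx x /\ sx x ^ 4 = 1 + x^2.
Proof.
  unfold sx.
  assert (H0 : 0 <= 1 + x^2) by nra.
  assert (H1 : 1 <= sqrt (1 + x^2)).
  { pose proof (sqrt_le_1_alt 1 (1+x^2) ltac:(nra)) as Hq. rewrite sqrt_1 in Hq. exact Hq. }
  split.
  - pose proof (sqrt_le_1_alt 1 (sqrt (1+x^2)) H1) as Hq. rewrite sqrt_1 in Hq. exact Hq.
  - replace (sqrt (sqrt (1 + x ^ 2)) ^ 4) with
      ((sqrt (sqrt (1 + x ^ 2)) * sqrt (sqrt (1 + x ^ 2))) * (sqrt (sqrt (1 + x ^ 2)) * sqrt (sqrt (1 + x ^ 2)))) by ring.
    rewrite sqrt_sqrt by lra. apply sqrt_sqrt. lra.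
Qed.

Lemma absx_le x : Rabs x <= sx x ^ 2.
Proof.
  destruct (sx_facts x) as [H1 H2].
  assert (0 <= sx x ^ 2) by nra.
  apply Rsqr_incr_0_var; [|assumption]. unfold Rsqr. rewrite <- Rabs_mult.
  rewrite Rabs_pos_eq by nra. nra.
Qed.

Lemma lim0 (g : R -> R) C : 0 <= C -> (forall x, Rabs (g x) <= C / sx x) ->
  is_lim g p_infty 0 /\ is_lim g m_infty 0.
Proof.
  intros HC Hg.
  assert (key : forall eps : posreal, forall x, (C / eps)^2 + 1 < Rabs x -> Rabs (g x - 0) < eps).
  { intros eps x Hx. rewrite Rminus_0_r.
    destruct (sx_facts x) as [H1 H2]. pose proof (absx_le x).
    pose proof (cond_pos eps).
    assert (Hs : C / eps < sx x).
    { assert (0 <= C / eps) by (apply Rdiv_le_0_compat; lra).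
      assert ((C/eps)^2 < sx x ^ 2) by nra.
      destruct (Rle_lt_dec (sx x) (C/eps)) as [Hle|Hlt]; [|exact Hlt].
      exfalso. assert (sx x ^ 2 <= (C/eps)^2) by (apply pow_incr; lra). lra. }
    eapply Rle_lt_trans; [apply Hg|].
    apply Rmult_lt_reg_r with (sx x); [lra|].
    unfold Rdiv. rewrite Rmult_assoc, Rinv_l by lra. rewrite Rmult_1_r.
    apply (Rmult_lt_compat_r eps) in Hs; [|lra].
    unfold Rdiv in Hs. rewrite Rmult_assoc, Rinv_l in Hs by lra. lra. }
  split; apply is_lim_spec; intros eps; simpl.
  - exists ((C/eps)^2 + 1). intros x Hx. apply key. rewrite Rabs_pos_eq; [lra|].
    pose proof (pow2_ge_0 (C/eps)). lra.
  - exists (- ((C/eps)^2 + 1)). intros x Hx. apply key. rewrite Rabs_left; [lra|].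
    pose proof (pow2_ge_0 (C/eps)). lra.
Qed.

Lemma atan_lim : is_lim atan p_infty (PI/2) /\ is_lim atan m_infty (- (PI/2)).
Proof.
  pose proof PI_RGT_0 as Hpi.
  assert (key : forall eps : posreal, exists M, forall x, M < x -> PI/2 - eps < atan x).
  { intros eps. set (e := Rmin eps (PI/2)).
    assert (He : 0 < e) by (unfold e; apply Rmin_pos; [apply cond_pos|lra]).
    assert (He2 : e <= PI/2) by (unfold e; apply Rmin_r).
    assert (He3 : e <= eps) by (unfold e; apply Rmin_l).
    exists (tan (PI/2 - e)). intros x Hx.
    apply atan_increasing in Hx. rewrite atan_tan in Hx by lra. lra. }
  split; apply is_lim_spec; intros eps; simpl; destruct (key eps) as [M HM].
  - exists M. intros x Hx. specialize (HM x Hx). pose proof (atan_bound x).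
    apply Rabs_lt_between. split; lra.
  - exists (- M). intros x Hx. specialize (HM (- x) ltac:(lra)). rewrite atan_opp in HM.
    pose proof (atan_bound x).
    apply Rabs_lt_between. split; lra.
Qed.
Definition d1 x := 2*x/(1+x^2).
Definition d2 x := 2*(1-x^2)/(1+x^2)^2.
Definition d3 x := 4*x*(x^2-3)/(1+x^2)^3.
Definition d4 x := -12*(x^4-6*x^2+1)/(1+x^2)^4.

Lemma pos1 x : 0 < 1 + x^2.
Proof. nra. Qed.
Lemma nz1 x : 1 + x^2 <> 0.
Proof. pose proof (pos1 x); lra. Qed.

Ltac nzp := apply Rgt_not_eq; apply Rlt_gt; repeat (apply Rmult_lt_0_compat || apply pow_lt); try nra.

Ltac sidec := repeat split; try (apply Rgt_not_eq; apply Rlt_gt); repeat (apply Rmult_lt_0_compat || apply pow_lt); try nra.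

Lemma der_f1 x : is_derive f1 x (d1 x).
Proof. unfold f1, d1. auto_derive; [sidec | field; sidec]. Qed.
Lemma der_d1 x : is_derive d1 x (d2 x).
Proof. unfold d1, d2. auto_derive; [sidec | field; sidec]. Qed.
Lemma der_d2 x : is_derive d2 x (d3 x).
Proof. unfold d2, d3. auto_derive; [sidec | field; sidec]. Qed.
Lemma der_d3 x : is_derive d3 x (d4 x).
Proof. unfold d3, d4. auto_derive; [sidec | field; sidec]. Qed.

Lemma Dn4 x : Derive_n f1 4 x = d4 x.
Proof.
  assert (H1 : forall y, Derive_n f1 1 y = d1 y).
  { intros y. change (Derive f1 y = d1 y). apply is_derive_unique, der_f1. }
  assert (H2 : forall y, Derive_n f1 2 y = d2 y).
  { intros y. change (Derive (Derive_n f1 1) y = d2 y).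
    rewrite (Derive_ext _ _ _ H1). apply is_derive_unique, der_d1. }
  assert (H3 : forall y, Derive_n f1 3 y = d3 y).
  { intros y. change (Derive (Derive_n f1 2) y = d3 y).
    rewrite (Derive_ext _ _ _ H2). apply is_derive_unique, der_d2. }
  change (Derive (Derive_n f1 3) x = d4 x).
  rewrite (Derive_ext _ _ _ H3). apply is_derive_unique, der_d3.
Qed.

Definition F0 x := d4 x * f1 x ^ 3.
Definition Bf x := d3 x * f1 x ^ 3 - 3 * d2 x * f1 x ^ 2 * d1 x + 2 * f1 x * d1 x ^ 3.
Definition Nf x := 3 * f1 x ^ 2 * d2 x ^ 2.
Definition Ef x := -2 * d1 x ^ 4.

Lemma der_B x : is_derive Bf x (F0 x - Nf x - Ef x).
Proof.
  unfold Bf, F0, Nf, Ef, d1, d2, d3, d4, f1.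
  auto_derive; [sidec|].
  replace (ln (1 + x * (x * 1))) with (ln (1+x^2)) by (f_equal; ring).
  set (L := ln (1 + x^2)). field; sidec.
Qed.
Definition Pq : list R := [(4/25); (163/50); (159/50); (124/25); (18/25)].
Definition Aq : list R := [(4/25); (433/50); (-2/5); (1259/50); (38/25); (18/25)].
Definition PolL : list R := [(8); (204); (2257); (13242); (36099); (4264); (443142); (12165756); (118132462); (730057040); (3341045213); (12070023486); (35546121519); (86730507564); (176291236888); (297163001316); (408106237692); (438555172648); (338312134770); (164529070532); (143785903574); (620776990944); (1863201532068); (3820372369656); (6022419825060); (7745840917488); (8376131592114); (7731140933372); (6127523387622); (4166404082824); (2410720913064); (1165691895912); (454410195976); (132270465132); (23532527805); (1292596258); (1632462311); (3070226264); (2555796294); (1420159308); (595377726); (197080672); (52288113); (11095590); (1853227); (235884); (21584); (1268); (36)].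
Definition PolD : R := (50).
Definition RMl : list R := [(-18786207/10240000); (-6229301/320000); (-4698759433/51200000); (-349565921/1400000); (-51966576287/107520000); (-92065507/144375); (-67685775713/107520000); (-23439671/56000); (-2055479243/10240000); (-15487691/320000); (-8982957/2048000)].
Definition aM : R := (18786207/10240000).
Definition REl : list R := [(2); (16/3); (-2)].
Definition qf x := x * pe Pq (x^2) / (1+x^2)^4.
Definition dq x := pe Aq (x^2) / (1+x^2)^5.
Lemma der_q x : is_derive qf x (dq x).
Proof. unfold qf, dq, Pq, Aq. cbn [pe]. auto_derive; [sidec| field; sidec]. Qed.
Lemma polya x : 0 <= x -> dq x - d1 x = pe PolL x / (PolD * (1+x)^38 * (1+x^2)^5).
Proof. intros Hx. unfold dq, d1, PolL, PolD, Aq. cbn [pe]. field; sidec. Qed.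
Definition M x := 3 * qf x ^2 * d2 x ^2.
Definition KM x := x * pe RMl (x^2) / (1+x^2)^11 + aM * atan x.
Lemma der_KM x : is_derive KM x (M x).
Proof. unfold KM, M, qf, d2, RMl, aM, Pq. cbn [pe]. auto_derive; [sidec| field; sidec]. Qed.
Definition KE x := x * pe REl (x^2) / (1+x^2)^3 + (-2) * atan x.
Lemma der_KE x : is_derive KE x (Ef x).
Proof. unfold KE, Ef, d1, REl. cbn [pe]. auto_derive; [sidec| field; sidec]. Qed.

Lemma f1_nonneg x : 0 <= f1 x.
Proof. unfold f1. rewrite <- ln_1. apply ln_le; [lra|]. pose proof (pow2_ge_0 x); lra. Qed.

Lemma f1_le_s x : f1 x <= 4 * sx x.
Proof.
  destruct (sx_facts x) as [H1 H2].
  unfold f1. rewrite <- H2. rewrite ln_pow by lra.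
  replace (INR 4) with 4 by (simpl; ring).
  assert (ln (sx x) <= sx x - 1).
  { destruct (Req_dec (ln (sx x)) 0) as [He|Hn].
    - rewrite He; lra.
    - pose proof (exp_ineq1 _ Hn). rewrite exp_ln in H by lra. lra. }
  lra.
Qed.

Lemma polL_nonneg : List.Forall (fun c => 0 <= c) PolL.
Proof. unfold PolL. repeat (apply List.Forall_cons; [lra|]); apply List.Forall_nil. Qed.

Lemma dq_ge x : 0 <= x -> d1 x <= dq x.
Proof.
  intros Hx. assert (H := polya x Hx).
  assert (0 <= pe PolL x) by (apply pe_nonneg; [exact Hx| exact polL_nonneg]).
  assert (0 < PolD * (1+x)^38 * (1+x^2)^5).
  { unfold PolD. repeat apply Rmult_lt_0_compat; try apply pow_lt; nra. }
  assert (0 <= pe PolL x / (PolD * (1 + x) ^ 38 * (1 + x ^ 2) ^ 5)) by (apply Rdiv_le_0_compat; lra).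
  lra.
Qed.

Lemma qf_ge x : 0 <= x -> f1 x <= qf x.
Proof.
  intros Hx.
  assert (H := mono_nd (fun y => qf y - f1 y) (fun y => dq y - d1 y) 0 x).
  assert (H0 : qf 0 - f1 0 = 0).
  { unfold qf, f1. replace (1 + 0^2) with 1 by ring. rewrite ln_1. simpl. field. }
  cut (0 <= qf x - f1 x); [lra|]. rewrite <- H0. apply H; [|intros y Hy; pose proof (dq_ge y ltac:(lra)); lra|lra].
  intros y. apply (is_derive_minus qf f1 y). apply der_q. apply der_f1.
Qed.

Lemma f1_even x : f1 (- x) = f1 x.
Proof. unfold f1. f_equal. ring. Qed.
Lemma qf_odd x : qf (- x) = - qf x.
Proof. unfold qf. replace ((-x)^2) with (x^2) by ring. field. sidec. Qed.

Lemma f1sq_le x : f1 x ^ 2 <= qf x ^ 2.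
Proof.
  pose proof (f1_nonneg x).
  destruct (Rle_dec 0 x) as [Hx|Hx].
  - pose proof (qf_ge x Hx). nra.
  - pose proof (qf_ge (-x) ltac:(lra)). rewrite f1_even, qf_odd in H0. nra.
Qed.

Lemma N_le_M x : Nf x <= M x.
Proof.
  unfold Nf, M. pose proof (f1sq_le x). pose proof (pow2_ge_0 (d2 x)). nra.
Qed.

Lemma Nf_nonneg x : 0 <= Nf x.
Proof. unfold Nf. pose proof (pow2_ge_0 (f1 x)). pose proof (pow2_ge_0 (d2 x)). nra. Qed.

Lemma rat_bound l m b x : 0 <= b -> List.Forall (fun c => Rabs c <= b) l -> (length l <= S m)%nat ->
  Rabs (x * pe l (x^2) / (1+x^2)^(S m)) <= INR (length l) * b / sx x.
Proof.
  intros Hb Hl Hm.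
  destruct (sx_facts x) as [H1 H2]. pose proof (absx_le x) as Ha.
  assert (Hu : 0 <= x^2) by apply pow2_ge_0.
  pose proof (pe_bound l b (x^2) Hu Hb Hl) as Hp.
  assert (Hpow : (1+x^2)^(pred (length l)) <= (1+x^2)^m).
  { destruct (length l) eqn:E; simpl.
    - apply pow_R1_Rle; lra.
    - apply Rle_pow; lia || lra. }
  assert (0 <= INR (length l)) by apply pos_INR.
  assert (Hp2 : Rabs (pe l (x^2)) <= INR (length l) * b * (1+x^2)^m).
  { eapply Rle_trans; [exact Hp|]. apply Rmult_le_compat_l; [nra|exact Hpow]. }
  assert (Hpm : 0 < (1+x^2)^m) by (apply pow_lt; lra).
  unfold Rdiv. rewrite !Rabs_mult, Rabs_inv, (Rabs_pos_eq ((1+x^2)^(S m))) by (apply pow_le; lra).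
  change ((1+x^2)^(S m)) with ((1+x^2) * (1+x^2)^m).
  rewrite Rinv_mult.
  set (K := INR (length l) * b) in *.
  assert (0 <= K) by (unfold K; nra).
  set (P := Rabs (pe l (x ^ 2))) in *.
  set (Q := (1+x^2)^m) in *.
  assert (HP : P * / Q <= K) .
  { apply (Rmult_le_reg_r Q); [exact Hpm|]. rewrite Rmult_assoc, Rinv_l by lra. lra. }
  rewrite <- H2.
  assert (0 <= P) by apply Rabs_pos.
  assert (0 < sx x) by lra.
  assert (Hx4 : Rabs x * / sx x ^ 4 <= / sx x).
  { apply (Rmult_le_reg_r (sx x ^ 4)); [apply pow_lt; lra|].
    rewrite Rmult_assoc, Rinv_l by (apply pow_nonzero; lra). rewrite Rmult_1_r.
    replace (/ sx x * sx x ^ 4) with (sx x ^ 3) by (field; lra). nra. }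
  assert (0 <= / sx x ^ 4) by (apply Rlt_le, Rinv_0_lt_compat, pow_lt; lra).
  assert (0 <= P * / Q) by (apply Rmult_le_pos; [lra|apply Rlt_le, Rinv_0_lt_compat; lra]).
  replace (Rabs x * P * (/ sx x ^ 4 * / Q)) with ((Rabs x * / sx x ^ 4) * (P * / Q)) by ring.
  replace (K * / sx x) with (/ sx x * K) by ring.
  apply Rmult_le_compat; try assumption. apply Rmult_le_pos; [apply Rabs_pos|assumption].
Qed.

Lemma B_bound x : Rabs (Bf x) <= 1024 / sx x.
Proof.
  destruct (sx_facts x) as [H1 H2]. pose proof (absx_le x) as Ha.
  pose proof (f1_nonneg x) as Hf0. pose proof (f1_le_s x) as Hf1.
  set (s := sx x) in *. set (f := f1 x) in *. set (a := Rabs x) in *.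
  assert (Ha0 : 0 <= a) by apply Rabs_pos.
  assert (Hx2 : x^2 = a^2) by (unfold a; rewrite RPow_abs; rewrite Rabs_pos_eq; [reflexivity| apply pow2_ge_0]).
  assert (Hs2 : 0 < s^2) by nra.
  assert (Hs4 : 0 < s^4) by nra.
  assert (Hden : 0 < 1 + x^2) by nra.
  assert (E1 : Rabs (d1 x) * (1+x^2) = 2 * a).
  { unfold d1, a. unfold Rdiv. rewrite !Rabs_mult, Rabs_inv, (Rabs_pos_eq 2), (Rabs_pos_eq (1+x^2)) by lra. field. lra. }
  assert (E2 : Rabs (d2 x) * (1+x^2)^2 = 2 * Rabs (1 - x^2)).
  { unfold d2. unfold Rdiv. rewrite !Rabs_mult, Rabs_inv, (Rabs_pos_eq 2), (Rabs_pos_eq ((1+x^2)^2)) by (try apply pow_le; lra). field. lra. }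
  assert (E3 : Rabs (d3 x) * (1+x^2)^3 = 4 * a * Rabs (x^2 - 3)).
  { unfold d3, a. unfold Rdiv. rewrite !Rabs_mult, Rabs_inv, (Rabs_pos_eq 4), (Rabs_pos_eq ((1+x^2)^3)) by (try apply pow_le; lra). field. lra. }
  assert (R2 : Rabs (1 - x^2) <= 1 + x^2) by (apply Rabs_le; nra).
  assert (R3 : Rabs (x^2 - 3) <= 3 * (1 + x^2)) by (apply Rabs_le; nra).
  set (A1 := Rabs (d1 x)) in *. set (A2 := Rabs (d2 x)) in *. set (A3 := Rabs (d3 x)) in *.
  assert (P1 : 0 <= A1) by apply Rabs_pos.
  assert (P2 : 0 <= A2) by apply Rabs_pos.
  assert (P3 : 0 <= A3) by apply Rabs_pos.
  rewrite <- H2 in E1, E2, E3, R2, R3.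
  assert (B1 : A1 * s^2 <= 2) by nra.
  assert (B2 : A2 * s^4 <= 2).
  { assert (A2 * s^4 * s^4 <= 2 * s^4) by (replace (A2 * s^4 * s^4) with (A2 * (s^4)^2) by ring; nra). nra. }
  assert (B3 : A3 * s^6 <= 12).
  { assert (A3 * (s^4)^3 <= 12 * s^2 * s^4) by nra.
    assert (A3 * s^6 * s^6 <= 12 * s^6) by (replace (A3 * s^6 * s^6) with (A3 * (s^4)^3) by ring; nra).
    assert (0 < s^6) by nra. nra. }
  assert (HB : Rabs (Bf x) <= A3 * f^3 + 3 * A2 * f^2 * A1 + 2 * f * A1^3).
  { unfold Bf. fold f.
    assert (Q1 : Rabs (d3 x * f^3) = A3 * f^3) by (unfold A3; rewrite Rabs_mult, <- RPow_abs, (Rabs_pos_eq f Hf0); reflexivity).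
    assert (Q2 : Rabs (3 * d2 x * f^2 * d1 x) = 3 * A2 * f^2 * A1)
      by (unfold A1, A2; rewrite !Rabs_mult, <- RPow_abs, (Rabs_pos_eq f Hf0), (Rabs_pos_eq 3) by lra; reflexivity).
    assert (Q3 : Rabs (2 * f * d1 x ^ 3) = 2 * f * A1^3)
      by (unfold A1; rewrite !Rabs_mult, <- RPow_abs, (Rabs_pos_eq f Hf0), (Rabs_pos_eq 2) by lra; reflexivity).
    rewrite <- Q1, <- Q2, <- Q3.
    unfold Rminus. eapply Rle_trans; [apply Rabs_triang|]. apply Rplus_le_compat_r.
    eapply Rle_trans; [apply Rabs_triang|]. rewrite Rabs_Ropp. lra. }
  assert (Hf3 : f^3 <= 64 * s^3) by (replace (64 * s^3) with ((4*s)^3) by ring; apply pow_incr; lra).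
  assert (Hf2 : f^2 <= 16 * s^2) by (replace (16 * s^2) with ((4*s)^2) by ring; apply pow_incr; lra).
  assert (T1 : A3 * f^3 * s <= 768).
  { assert (A3 * f^3 * s <= A3 * (64 * s^3) * s) by (apply Rmult_le_compat_r; [lra|]; apply Rmult_le_compat_l; lra).
    assert (A3 * (64 * s^3) * s <= 64 * (A3 * s^6)) by (replace (64 * (A3 * s^6)) with (A3 * (64 * s^3) * s * s^2) by ring; assert (0 <= A3 * (64 * s^3) * s) by (apply Rmult_le_pos; [|lra]; apply Rmult_le_pos; nra); nra).
    lra. }
  assert (T2 : 3 * A2 * f^2 * A1 * s <= 192).
  { assert (0 <= f^2) by apply pow2_ge_0.
    assert (3 * A2 * f^2 * A1 * s <= 3 * A2 * (16 * s^2) * A1 * s).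
    { apply Rmult_le_compat_r; [lra|]. apply Rmult_le_compat_r; [lra|]. apply Rmult_le_compat_l; nra. }
    assert (3 * A2 * (16 * s^2) * A1 * s = 48 * (A2 * s^4) * (A1 * s^2) / s^3) by (field; lra).
    assert (0 <= A2 * s^4) by nra. assert (0 <= A1 * s^2) by nra.
    assert ((A2 * s^4) * (A1 * s^2) <= 4) by nra.
    assert (1 <= s^3) by (apply pow_R1_Rle; lra).
    assert (48 * (A2 * s ^ 4) * (A1 * s ^ 2) / s ^ 3 <= 48 * (A2 * s ^ 4) * (A1 * s ^ 2)).
    { unfold Rdiv. rewrite <- (Rmult_1_r (48 * (A2 * s ^ 4) * (A1 * s ^ 2))) at 2.
      apply Rmult_le_compat_l; [nra|]. rewrite <- Rinv_1. apply Rinv_le_contravar; lra. }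
    lra. }
  assert (T3 : 2 * f * A1^3 * s <= 64).
  { assert (2 * f * A1^3 * s <= 2 * (4 * s) * A1^3 * s).
    { apply Rmult_le_compat_r; [lra|]. apply Rmult_le_compat_r; [apply pow_le; lra|]. lra. }
    assert (2 * (4 * s) * A1^3 * s = 8 * (A1 * s^2)^3 / s^4) by (field; lra).
    assert (0 <= A1 * s^2) by nra.
    assert ((A1 * s^2)^3 <= 8) by (replace 8 with (2^3) by ring; apply pow_incr; lra).
    assert (1 <= s^4) by (apply pow_R1_Rle; lra).
    assert (8 * (A1 * s ^ 2) ^ 3 / s ^ 4 <= 8 * (A1 * s ^ 2) ^ 3).
    { unfold Rdiv. rewrite <- (Rmult_1_r (8 * (A1 * s ^ 2) ^ 3)) at 2.
      apply Rmult_le_compat_l; [apply Rmult_le_pos; [lra|apply pow_le; lra]|]. rewrite <- Rinv_1. apply Rinv_le_contravar; lra. }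
    lra. }
  apply (Rmult_le_reg_r s); [lra|].
  unfold Rdiv. rewrite Rmult_assoc, Rinv_l, Rmult_1_r by lra.
  nra.
Qed.

Definition ratM x := x * pe RMl (x^2) / (1+x^2)^11.
Definition ratE x := x * pe REl (x^2) / (1+x^2)^3.

Lemma ratM_bound x : Rabs (ratM x) <= 11 * 700 / sx x.
Proof.
  replace (11 * 700) with (INR (length RMl) * 700) by (simpl; ring).
  apply rat_bound; [lra| |simpl; lia].
  unfold RMl. repeat (apply List.Forall_cons; [apply Rabs_le; lra|]); apply List.Forall_nil.
Qed.

Lemma ratE_bound x : Rabs (ratE x) <= 3 * 6 / sx x.
Proof.
  replace (3 * 6) with (INR (length REl) * 6) by (simpl; ring).
  apply rat_bound; [lra| |simpl; lia].
  unfold REl. repeat (apply List.Forall_cons; [apply Rabs_le; lra|]); apply List.Forall_nil.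
Qed.

Lemma inv_sx_le1 x : / sx x <= 1.
Proof. destruct (sx_facts x). rewrite <- Rinv_1. apply Rinv_le_contravar; lra. Qed.

Lemma KM_bound x : Rabs (KM x) <= 7700 + 4 * aM.
Proof.
  unfold KM. fold (ratM x).
  pose proof (ratM_bound x). pose proof (inv_sx_le1 x). pose proof (atan_bound x). pose proof PI_4.
  assert (0 < aM) by (unfold aM; lra).
  eapply Rle_trans; [apply Rabs_triang|].
  rewrite Rabs_mult, (Rabs_pos_eq aM) by lra.
  assert (Rabs (atan x) <= 4) by (apply Rabs_le; lra).
  assert (11 * 700 / sx x <= 7700) by (unfold Rdiv; nra).
  nra.
Qed.

Lemma F0_cont x : continuous F0 x.
Proof.
  apply (ex_derive_continuous (K := R_AbsRing) (V := R_NormedModule)).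
  unfold F0, d4, f1. auto_derive. sidec.
Qed.

Definition Psi x := RInt F0 0 x.

Lemma der_Psi x : is_derive Psi x (F0 x).
Proof.
  apply (is_derive_RInt F0 Psi 0 x).
  - apply filter_forall. intros b. unfold Psi. apply (RInt_correct (V := R_CompleteNormedModule)).
    apply (ex_RInt_continuous (V := R_CompleteNormedModule)). intros z _. apply F0_cont.
  - apply F0_cont.
Qed.

Definition Hf x := Bf x + KM x + KE x.

Lemma der_H x : is_derive Hf x (F0 x - Nf x + M x).
Proof.
  pose proof (is_derive_plus _ _ _ _ _ (is_derive_plus _ _ _ _ _ (der_B x) (der_KM x)) (der_KE x)) as H.
  replace (F0 x - Nf x + M x) with (plus (plus (F0 x - Nf x - Ef x) (M x)) (Ef x)) by (unfold plus; simpl; ring).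
  exact H.
Qed.

Definition Dm x := Psi x - Hf x.
Definition Lf x := Dm x + KM x.

Lemma der_D x : is_derive Dm x (Nf x - M x).
Proof.
  pose proof (is_derive_minus _ _ _ _ _ (der_Psi x) (der_H x)) as H.
  replace (Nf x - M x) with (minus (F0 x) (F0 x - Nf x + M x)) by (unfold minus, plus, opp; simpl; ring).
  exact H.
Qed.

Lemma der_L x : is_derive Lf x (Nf x).
Proof.
  pose proof (is_derive_plus _ _ _ _ _ (der_D x) (der_KM x)) as H.
  replace (Nf x) with (plus (Nf x - M x) (M x)) by (unfold plus; simpl; ring).
  exact H.
Qed.

Lemma D_mono x y : x <= y -> Dm y <= Dm x.
Proof.
  intros Hxy.
  assert (H := mono_nd (fun t => - Dm t) (fun t => - (Nf t - M t)) x y).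
  cut (- Dm x <= - Dm y); [lra|]. apply H; [| |exact Hxy].
  - intros t. apply (is_derive_opp Dm t). apply der_D.
  - intros t _. pose proof (N_le_M t). lra.
Qed.

Lemma L_mono x y : x <= y -> Lf x <= Lf y.
Proof.
  intros Hxy. apply (mono_nd Lf Nf x y); [apply der_L| |exact Hxy].
  intros t _. apply Nf_nonneg.
Qed.

Definition CK := 7700 + 4 * aM.

Lemma D_limp : exists l : R, is_lim Dm p_infty l /\ l <= Dm 0.
Proof.
  apply (ML1 Dm (Lf 0 - CK)). apply D_mono.
  intros x Hx. pose proof (L_mono 0 x Hx). pose proof (KM_bound x).
  apply Rabs_le_between in H0. unfold Lf, CK in *. lra.
Qed.

Lemma D_limm : exists l : R, is_lim Dm m_infty l /\ Dm 0 <= l.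
Proof.
  apply (ML2 Dm (Lf 0 + CK)). apply D_mono.
  intros x Hx. pose proof (L_mono x 0 Hx). pose proof (KM_bound x).
  apply Rabs_le_between in H0. unfold Lf, CK in *. lra.
Qed.

Lemma sc_lim f a x (l : R) : is_lim f x l -> is_lim (fun y => a * f y) x (a * l).
Proof. intros H. apply is_lim_scal_l with (a := a) in H. simpl in H. exact H. Qed.

Lemma H_lim : is_lim Hf p_infty ((aM - 2) * (PI/2)) /\ is_lim Hf m_infty (- ((aM - 2) * (PI/2))).
Proof.
  destruct (lim0 Bf 1024 ltac:(lra) B_bound) as [Bp Bm].
  destruct (lim0 ratM (11*700) ltac:(lra) ratM_bound) as [Mp Mm].
  destruct (lim0 ratE (3*6) ltac:(lra) ratE_bound) as [Ep Em].
  destruct atan_lim as [Ap Am].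
  assert (Heq : forall y, Bf y + ((ratM y + aM * atan y) + (ratE y + (-2) * atan y)) = Hf y).
  { intros y. unfold Hf, KM, KE, ratM, ratE. ring. }
  split.
  - eapply is_lim_ext; [exact Heq|].
    replace ((aM - 2) * (PI/2)) with (0 + ((0 + aM * (PI/2)) + (0 + (-2) * (PI/2)))) by ring.
    apply is_lim_plus'; [exact Bp|]. apply is_lim_plus'.
    + apply is_lim_plus'; [exact Mp|]. apply sc_lim, Ap.
    + apply is_lim_plus'; [exact Ep|]. apply sc_lim, Ap.
  - eapply is_lim_ext; [exact Heq|].
    replace (- ((aM - 2) * (PI/2))) with (0 + ((0 + aM * (- (PI/2))) + (0 + (-2) * (- (PI/2))))) by ring.
    apply is_lim_plus'; [exact Bm|]. apply is_lim_plus'.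
    + apply is_lim_plus'; [exact Mm|]. apply sc_lim, Am.
    + apply is_lim_plus'; [exact Em|]. apply sc_lim, Am.
Qed.

Theorem lemma2p2 :
  exists v : R,
    is_RInt_gen (fun x => Derive_n f1 4 x * (f1 x) ^ 3)
      (Rbar_locally m_infty) (Rbar_locally p_infty) v
    /\ v < 0.
Proof.
  destruct D_limp as [lp [Hlp Hlp0]].
  destruct D_limm as [lm [Hlm Hlm0]].
  destruct H_lim as [Hp Hm].
  set (c := (aM - 2) * (PI/2)) in *.
  assert (HPp : is_lim Psi p_infty (lp + c)).
  { eapply is_lim_ext; [|apply (is_lim_plus' _ _ _ _ _ Hlp Hp)]. intros y; unfold Dm; ring. }
  assert (HPm : is_lim Psi m_infty (lm + - c)).
  { eapply is_lim_ext; [|apply (is_lim_plus' _ _ _ _ _ Hlm Hm)]. intros y; unfold Dm; ring. }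
  exists ((lp + c) - (lm + - c)). split.
  - assert (HD : forall y, Derive Psi y = F0 y) by (intros y; apply is_derive_unique, der_Psi).
    apply (is_RInt_gen_ext (Derive Psi)).
    + apply filter_forall. intros ab y _. rewrite HD. unfold F0. rewrite Dn4. reflexivity.
    + apply is_RInt_gen_Derive.
      * apply filter_forall. intros ab y _. eexists. apply der_Psi.
      * apply filter_forall. intros ab y _. apply (continuous_ext F0). intros t; symmetry; apply HD. apply F0_cont.
      * exact HPm.
      * exact HPp.
  - assert (aM < 2) by (unfold aM; lra). pose proof PI_RGT_0.
    assert (c < 0) by (unfold c; nra). lra.
Qed.
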